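(* Let $Q$ be a $3\times 3$ array containing each of the symbols $0,1,\dots,8$ exactly once, such that each row and each column of $Q$ has sum $12$. Then either the entry sets of the three rows of $Q$ are $\{0,4,8\}$, $\{1,5,6\}$, $\{2,3,7\}$ (in some order) and the entry sets of the three columns are $\{0,5,7\}$, $\{2,4,6\}$, $\{1,3,8\}$ (in some order), or the same holds with the roles of rows and columns interchanged. *)

(* Defs.v *)
From mathcomp Require Import all_boot.
Set Implicit Arguments. Unset Strict Implicit. Unset Printing Implicit Defensive.

Definition array3 := 'I_3 -> 'I_3 -> 'I_9.

Definition symset (s : seq nat) : {set 'I_9} := [set k : 'I_9 | val k \in s].

Definition row_set (Q : array3) (i : 'I_3) : {set 'I_9} := [set Q i j | j : 'I_3].
Definition col_set (Q : array3) (j : 'I_3) : {set 'I_9} := [set Q i j | i : 'I_3].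

Definition row_sets (Q : array3) : {set {set 'I_9}} := [set row_set Q i | i : 'I_3].
Definition col_sets (Q : array3) : {set {set 'I_9}} := [set col_set Q j | j : 'I_3].

Definition rowsA : {set {set 'I_9}} :=
  [set symset [:: 0; 4; 8]; symset [:: 1; 5; 6]; symset [:: 2; 3; 7]].
Definition colsA : {set {set 'I_9}} :=
  [set symset [:: 0; 5; 7]; symset [:: 2; 4; 6]; symset [:: 1; 3; 8]].

(* Main.v *)
Require Import Defs.
From mathcomp Require Import all_boot.
From mathcomp Require Import zify.

Definition o0 : 'I_3 := @Ordinal 3 0 isT.
Definition o1 : 'I_3 := @Ordinal 3 1 isT.
Definition o2 : 'I_3 := @Ordinal 3 2 isT.

Definition A3 : seq (seq nat) := [:: [::0;4;8];[::1;5;6];[::2;3;7]].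
Definition C3 : seq (seq nat) := [:: [::0;5;7];[::2;4;6];[::1;3;8]].

Definition concl (a b c d e f g h i : nat) : bool :=
  let R := map (sort leq) [:: [::a;b;c];[::d;e;f];[::g;h;i]] in
  let C := map (sort leq) [:: [::a;d;g];[::b;e;h];[::c;f;i]] in
  (perm_eq R A3 && perm_eq C C3) || (perm_eq C A3 && perm_eq R C3).

Definition P (a b c d e f g h i : nat) : bool :=
  (uniq [:: a;b;c;d;e;f;g;h;i] && all (fun x => x < 9) [:: a;b;c;d;e;f;g;h;i]
   && (g + h + i == 12) && (a + b + c == 12) && (d + e + f == 12)
   && (a + d + g == 12) && (b + e + h == 12) && (c + f + i == 12))
  ==> concl a b c d e f g h i.

Definition checkb : bool :=
  all (fun a => all (fun b => all (fun d => all (fun e =>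
    P a b (12-a-b) d e (12-d-e) (12-a-d) (12-b-e) (12-(12-a-b)-(12-d-e)))
   (iota 0 9)) (iota 0 9)) (iota 0 9)) (iota 0 9).

Lemma checkb_true : checkb = true.
Proof. vm_compute. reflexivity. Qed.

Lemma check_spec a b d e : a < 9 -> b < 9 -> d < 9 -> e < 9 ->
  P a b (12-a-b) d e (12-d-e) (12-a-d) (12-b-e) (12-(12-a-b)-(12-d-e)).
Proof.
move=> Ha Hb Hd He; have := checkb_true; rewrite /checkb.
move/allP => /(_ a); rewrite mem_iota add0n leq0n => /(_ Ha).
move/allP => /(_ b); rewrite mem_iota add0n leq0n => /(_ Hb).
move/allP => /(_ d); rewrite mem_iota add0n leq0n => /(_ Hd).
move/allP => /(_ e); rewrite mem_iota add0n leq0n => /(_ He).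
done.
Qed.

Lemma ord3_cases (j : 'I_3) : j \in [:: o0; o1; o2].
Proof. by case: j => [[|[|[|]]] ?]. Qed.

Lemma sum3 (F : 'I_3 -> nat) : \sum_(j < 3) F j = F o0 + F o1 + F o2.
Proof.
rewrite !big_ord_recl big_ord0 addn0 addnA.
by congr (_ + _ + _); apply: congr1; apply: val_inj.
Qed.

Lemma imset3 (T : finType) (F : 'I_3 -> T) :
  [set F i | i : 'I_3] = [set:: [:: F o0; F o1; F o2]].
Proof.
apply/setP=> x; rewrite inE; apply/imsetP/idP.
  move=> [j _ ->]; have := ord3_cases j.
  by rewrite !in_cons in_nil orbF => /or3P [] /eqP ->; rewrite eqxx ?orbT.
rewrite !in_cons in_nil orbF => /or3P [] /eqP ->.
- by exists o0.
- by exists o1.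
- by exists o2.
Qed.

Lemma symset3 (F : 'I_3 -> 'I_9) :
  [set F j | j : 'I_3] = symset [:: val (F o0); val (F o1); val (F o2)].
Proof.
rewrite imset3; apply/setP=> x; rewrite /symset !inE.
by rewrite -!(inj_eq val_inj).
Qed.

Lemma symset_sort s : symset s = symset (sort leq s).
Proof. by apply/setP=> x; rewrite /symset !inE mem_sort. Qed.

Lemma setseq_perm (T : finType) (s t : seq T) : perm_eq s t -> [set:: s] = [set:: t].
Proof. by move=> H; apply/setP=> x; rewrite !inE (perm_mem H). Qed.

Lemma rowsAE : rowsA = [set:: map symset A3].
Proof. by apply/setP=> x; rewrite /rowsA /A3 /= !inE orbA. Qed.
Lemma colsAE : colsA = [set:: map symset C3].
Proof. by apply/setP=> x; rewrite /colsA /C3 /= !inE orbA. Qed.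

Lemma sets_eq (rs : seq (seq nat)) (T : seq (seq nat)) :
  perm_eq (map (sort leq) rs) T -> [set:: map symset rs] = [set:: map symset T].
Proof.
move=> H; apply: setseq_perm.
have -> : map symset rs = map symset (map (sort leq) rs).
  by rewrite -map_comp; apply: eq_map => s /=; rewrite -symset_sort.
by apply: perm_map.
Qed.

Theorem lemma3p1 (Q : 'I_3 -> 'I_3 -> 'I_9) :
  (* each symbol 0..8 occurs exactly once *)
  (forall k : 'I_9, exists! p : 'I_3 * 'I_3, Q p.1 p.2 = k) ->
  (* every row and every column sums to 12 *)
  (forall i : 'I_3, \sum_(j < 3) nat_of_ord (Q i j) = 12) ->
  (forall j : 'I_3, \sum_(i < 3) nat_of_ord (Q i j) = 12) ->
  (row_sets Q = rowsA /\ col_sets Q = colsA) \/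
  (col_sets Q = rowsA /\ row_sets Q = colsA).
Proof.
move=> Hu Hr Hc.
have inj : forall i j k l, (i, j) != (k, l) ->
    (nat_of_ord (Q i j) == nat_of_ord (Q k l)) = false.
  move=> i j k l Hne; apply/negbTE; apply: contra Hne => /eqP /val_inj E.
  have [p [_ Hp]] := Hu (Q k l).
  by rewrite -(Hp (i, j) E) -(Hp (k, l) erefl).
have R0 := Hr o0; have R1 := Hr o1; have R2 := Hr o2.
have C0 := Hc o0; have C1 := Hc o1; have C2 := Hc o2.
rewrite !sum3 in R0 R1 R2 C0 C1 C2.
have U : uniq [:: nat_of_ord (Q o0 o0); nat_of_ord (Q o0 o1); nat_of_ord (Q o0 o2);
                  nat_of_ord (Q o1 o0); nat_of_ord (Q o1 o1); nat_of_ord (Q o1 o2);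
                  nat_of_ord (Q o2 o0); nat_of_ord (Q o2 o1); nat_of_ord (Q o2 o2)].
  by rewrite /= !inE !inj.
have := @check_spec _ _ _ _ (ltn_ord (Q o0 o0)) (ltn_ord (Q o0 o1))
                   (ltn_ord (Q o1 o0)) (ltn_ord (Q o1 o1)).
have E1 : 12 - nat_of_ord (Q o0 o0) - nat_of_ord (Q o0 o1) = nat_of_ord (Q o0 o2) by lia.
have E2 : 12 - nat_of_ord (Q o1 o0) - nat_of_ord (Q o1 o1) = nat_of_ord (Q o1 o2) by lia.
have E3 : 12 - nat_of_ord (Q o0 o0) - nat_of_ord (Q o1 o0) = nat_of_ord (Q o2 o0) by lia.
have E4 : 12 - nat_of_ord (Q o0 o1) - nat_of_ord (Q o1 o1) = nat_of_ord (Q o2 o1) by lia.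
rewrite E1 E2 E3 E4.
have E5 : 12 - nat_of_ord (Q o0 o2) - nat_of_ord (Q o1 o2) = nat_of_ord (Q o2 o2) by lia.
rewrite E5 /P U /= !ltn_ord R0 R1 R2 C0 C1 C2 /= /concl.
have RS : row_sets Q = [set:: map symset
   [:: [:: nat_of_ord (Q o0 o0); nat_of_ord (Q o0 o1); nat_of_ord (Q o0 o2)];
       [:: nat_of_ord (Q o1 o0); nat_of_ord (Q o1 o1); nat_of_ord (Q o1 o2)];
       [:: nat_of_ord (Q o2 o0); nat_of_ord (Q o2 o1); nat_of_ord (Q o2 o2)]]].
  by rewrite /row_sets imset3 /row_set !symset3.
have CS : col_sets Q = [set:: map symset
   [:: [:: nat_of_ord (Q o0 o0); nat_of_ord (Q o1 o0); nat_of_ord (Q o2 o0)];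
       [:: nat_of_ord (Q o0 o1); nat_of_ord (Q o1 o1); nat_of_ord (Q o2 o1)];
       [:: nat_of_ord (Q o0 o2); nat_of_ord (Q o1 o2); nat_of_ord (Q o2 o2)]]].
  by rewrite /col_sets imset3 /col_set !(symset3 (fun i => Q i _)).
rewrite RS CS rowsAE colsAE.
case/orP=> /andP [H1 H2].
  by left; split; apply: sets_eq.
by right; split; apply: sets_eq.
Qed.
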